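(* Let $u\in[-1,1]^k$, and let $\pi$ be a permutation of $[k]$ and $y\in\mathcal{Y}$ with $u\in P_{\pi,y}$. Then $V^u_{\pi,y}:=\{\mathbbm{1}_{\pi,i}\odot y: i\in\{0,\dots,k\},\ \alpha_i(|u|)\neq0\}$ is a subset of $V_{\pi,y}$ with $u\in\mathrm{conv}(V^u_{\pi,y})$, and it has the smallest cardinality among all subsets $W\subseteq V_{\pi,y}$ with $u\in\mathrm{conv}(W)$.
   Context: $[k]=\{1,\dots,k\}$, $\mathcal{Y}=\{-1,1\}^k$; $\odot$ entrywise product, $|u|$ entrywise absolute value. For $i\in\{0,\dots,k\}$, $\mathbbm{1}_{\pi,i}$ is the indicator vector of $\{\pi_1,\dots,\pi_i\}$ ($\mathbbm{1}_{\pi,0}=0$); $V_{\pi,y}=\{\mathbbm{1}_{\pi,i}\odot y:i=0,\dots,k\}$ and $P_{\pi,y}=\mathrm{conv}(V_{\pi,y})$. For $x\in\mathbb{R}^k_+$ ordered by $\pi$ (i.e. $x_{\pi_1}\ge\dots\ge x_{\pi_k}$), $\alpha_0(x)=1-x_{\pi_1}$, $\alpha_i(x)=x_{\pi_i}-x_{\pi_{i+1}}$ for $1\le i\le k-1$, and $\alpha_k(x)=x_{\pi_k}$, so that $x=\sum_{i=0}^k\alpha_i(x)\mathbbm{1}_{\pi,i}$. *)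

(* Defs.v *)
From HB Require Import structures.
From mathcomp Require Import all_boot all_order all_algebra all_fingroup.
From mathcomp Require Import finmap.
Set Implicit Arguments. Unset Strict Implicit. Unset Printing Implicit Defensive.
Import Order.TTheory GRing.Theory Num.Theory.
Local Open Scope ring_scope.
Local Open Scope fset_scope.

(* Vectors of R^k are row vectors 'rV[R]_k; coordinates are indexed by 'I_k
   (0-based). A permutation pi of [k] is pi : 'S_k; pi_{i+1} (1-based) is
   pi (i) (0-based). *)

Definition emul (R : ringType) k (u v : 'rV[R]_k) : 'rV[R]_k :=
  \row_j (u 0 j * v 0 j).

Definition eabs (R : numDomainType) k (u : 'rV[R]_k) : 'rV[R]_k :=
  \row_j `|u 0 j|.

(* indicator vector 1_{pi,i} of {pi_1, ..., pi_i}, i in {0..k} *)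
Definition ind (R : ringType) k (pi : 'S_k) (i : nat) : 'rV[R]_k :=
  \row_j (if (nat_of_ord ((pi^-1)%g j) < i)%N then 1 else 0).

Definition vert (R : ringType) k (pi : 'S_k) (y : 'rV[R]_k) (i : nat) : 'rV[R]_k :=
  emul (ind R pi i) y.

Definition is_sign_vec (R : ringType) k (y : 'rV[R]_k) : Prop :=
  forall j, y 0 j = 1 \/ y 0 j = -1.

Definition Vset (R : realFieldType) k (pi : 'S_k) (y : 'rV[R]_k)
  : {fset 'rV[R]_k} :=
  [fset vert pi y (nat_of_ord i) | i in 'I_k.+1].

Definition in_conv (R : realFieldType) k (W : {fset 'rV[R]_k}) (u : 'rV[R]_k)
  : Prop :=
  exists lam : 'rV[R]_k -> R,
    (forall w, w \in W -> 0 <= lam w) /\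
    \sum_(w <- W) lam w = 1 /\
    u = \sum_(w <- W) lam w *: w.

(* x_{pi_{j+1}} (0-based position j) if j < k, and 0 otherwise *)
Definition pcoord (R : ringType) k (pi : 'S_k) (x : 'rV[R]_k) (j : nat) : R :=
  match @insub nat (fun j => (j < k)%N) 'I_k j with
  | Some o => x 0 (pi o)
  | None => 0
  end.

(* alpha_i(x) for x ordered by pi, i in {0..k}:
   alpha_0 = 1 - x_{pi_1}, alpha_i = x_{pi_i} - x_{pi_{i+1}}, alpha_k = x_{pi_k} *)
Definition alpha (R : ringType) k (pi : 'S_k) (x : 'rV[R]_k) (i : nat) : R :=
  (if i == 0%N then 1 else pcoord pi x i.-1) - pcoord pi x i.

Definition Vuset (R : realFieldType) k (pi : 'S_k) (y u : 'rV[R]_k)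
  : {fset 'rV[R]_k} :=
  [fset vert pi y (nat_of_ord i) | i in 'I_k.+1 & alpha pi (eabs u) i != 0].

(* Main.v *)
Require Import Defs.
From HB Require Import structures.
From mathcomp Require Import all_boot all_order all_algebra all_fingroup.
From mathcomp Require Import finmap.
From mathcomp Require Import zify.
Import Order.TTheory GRing.Theory Num.Theory.
Local Open Scope ring_scope.
Local Open Scope fset_scope.

Section Aux.
Variables (R : realFieldType) (k : nat) (pi : 'S_k) (y : 'rV[R]_k).
Hypothesis ys : is_sign_vec y.

Lemma vert_coord (i : nat) (o : 'I_k) :
  (vert pi y i) 0 (pi o) = (if (o < i)%N then y 0 (pi o) else 0).
Proof. by rewrite /vert /emul /ind !mxE permK; case: ifP; rewrite ?mul1r ?mul0r. Qed.

Lemma y_neq0 j : y 0 j != 0.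
Proof. by case: (ys j) => ->; rewrite ?oppr_eq0 oner_eq0. Qed.

Lemma y_abs j : `|y 0 j| = 1.
Proof. by case: (ys j) => ->; rewrite ?normrN normr1. Qed.

Lemma vert_inj : injective (fun i : 'I_k.+1 => vert pi y i).
Proof.
have H : forall i j : 'I_k.+1, (i < j)%N -> vert pi y i <> vert pi y j.
  move=> i j lij E.
  have ik : (i < k)%N by have := ltn_ord j; lia.
  have := congr1 (fun v : 'rV[R]_k => v 0 (pi (Ordinal ik))) E => /=.
  rewrite !vert_coord /= ltnn lij => /eqP; rewrite eq_sym (negbTE (y_neq0 _)).
  by [].
move=> i j /= E; case: (ltngtP i j) => h.
- by case: (H _ _ h E).
- by case: (H _ _ h (esym E)).
- by apply: val_inj.
Qed.

Lemma sumV (V : zmodType) (G : 'rV[R]_k -> V) :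
  \sum_(w <- Vset pi y) G w = \sum_(i < k.+1) G (vert pi y i).
Proof.
rewrite /Vset big_imfset /=; last by move=> a b _ _; apply: vert_inj.
by rewrite /enum_finmem big_enum.
Qed.

Lemma key (u : 'rV[R]_k) (W : {fset 'rV[R]_k}) (lam : 'rV[R]_k -> R) :
  W `<=` Vset pi y -> (forall w, w \in W -> 0 <= lam w) ->
  \sum_(w <- W) lam w = 1 -> u = \sum_(w <- W) lam w *: w ->
  forall i : 'I_k.+1,
    alpha pi (eabs u) i = (if vert pi y i \in W then lam (vert pi y i) else 0).
Proof.
move=> sub hl hs hu.
pose mu (i : 'I_k.+1) := if vert pi y i \in W then lam (vert pi y i) else 0.
have mu0 i : 0 <= mu i by rewrite /mu; case: ifP => // /hl.
have sumW (V : zmodType) (F : 'rV[R]_k -> V) :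
    \sum_(w <- W) F w = \sum_(i < k.+1) (if vert pi y i \in W then F (vert pi y i) else 0).
  rewrite (@eq_fbigr _ _ _ _ W xpredT F (fun w => if w \in W then F w else 0)); last by move=> x ->.
  rewrite (big_fset_incl _ sub); first by rewrite sumV.
  by move=> x _ /negbTE ->.
have h1 : \sum_(i < k.+1) mu i = 1 by rewrite -hs sumW.
have hu' : u = \sum_(i < k.+1) mu i *: vert pi y i.
  rewrite hu sumW; apply: eq_bigr => i _; rewrite /mu; case: ifP => //.
  by rewrite scale0r.
pose S (j : nat) := \sum_(i < k.+1 | (j < i)%N) mu i.
have S0 j : 0 <= S j by apply: sumr_ge0 => i _.
have coord (o : 'I_k) : u 0 (pi o) = y 0 (pi o) * S o.
  rewrite hu' summxE /S [RHS]mulr_sumr [RHS]big_mkcond; apply: eq_bigr => i _.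
  rewrite mxE vert_coord; case: ifP => _; first by rewrite mulrC.
  by rewrite mulr0.
have pc j : pcoord pi (eabs u) j = S j.
  rewrite /pcoord; case: insubP => [o _ eo|hn].
    by rewrite /eabs mxE coord normrM y_abs mul1r ger0_norm // eo.
  rewrite /S big1 // => i hi; exfalso; move: hn hi; have := ltn_ord i; lia.
move=> i; rewrite /alpha !pc -/(mu i).
have -> : (if i == 0%N :> nat then 1 else S i.-1) = \sum_(i' < k.+1 | (i <= i')%N) mu i'.
  case: eqP => [->|ne]; first by rewrite -h1; apply: eq_bigl => j.
  by apply: eq_bigl => j; apply/idP/idP; lia.
rewrite (bigD1 i) //= /S.
rewrite (eq_bigl (fun i' : 'I_k.+1 => (i < i')%N)); first by rewrite addrK.
by move=> j; rewrite ltn_neqAle andbC -val_eqE /= eq_sym.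
Qed.

End Aux.

Theorem lemma11 (R : realFieldType) (k : nat) (u : 'rV[R]_k) (pi : 'S_k)
    (y : 'rV[R]_k) :
  (forall j, `|u 0 j| <= 1) ->
  is_sign_vec y ->
  in_conv (Vset pi y) u ->
  [/\ Vuset pi y u `<=` Vset pi y,
      in_conv (Vuset pi y u) u &
      forall W : {fset 'rV[R]_k}, W `<=` Vset pi y -> in_conv W u ->
        (#|` Vuset pi y u| <= #|` W|)%N].
Proof.
move=> _ ys [lam [hl [hs hu]]].
have sub : Vuset pi y u `<=` Vset pi y.
  apply/fsubsetP => w /imfsetP [i /= hi ->].
  by apply/imfsetP; exists i.
have inV (i : 'I_k.+1) : vert pi y i \in Vset pi y by apply/imfsetP; exists i.
have K := @key R k pi y ys u _ _ (fsubset_refl _) hl hs hu.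
have z x : x \in Vset pi y -> x \notin Vuset pi y u -> lam x = 0.
  move=> /imfsetP [i /= _ ->] hn.
  have := K i; rewrite inV => <-.
  apply/eqP; apply: contraNT hn => hi.
  by apply/imfsetP; exists i.
split => //.
- exists lam; split; first by move=> w /(fsubsetP sub) /hl.
  split.
    by rewrite (big_fset_incl _ sub) // => x hx hn; rewrite z.
  by rewrite (big_fset_incl _ sub) // => x hx hn; rewrite z // scale0r.
- move=> W sW [l [hl' [hs' hu']]].
  apply: fsubset_leq_card; apply/fsubsetP => w /imfsetP [i /= hi ->].
  move: hi; rewrite inE (@key R k pi y ys u _ _ sW hl' hs' hu').
  by case: ifP => // _; rewrite eqxx.
Qed.
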